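(* Let $b\in\mathbb{N}$ and $0\le a\le b-1$ be integers, and let $m,n\ge 2$ be the minimal integers with $ma\equiv a \pmod b$ and $a^{n}\equiv a\pmod b$ (assumed to exist). Consider the polyadic ring $\mathbb{Z}^{[a,b]}_{(m,n)}$. If $\mathbb{Z}^{[a,b]}_{(m,n)}$ contains a polyadic prime number, then either $a=1$ and $(m,n)=(b+1,2)$, i.e. the ring is $\mathbb{Z}^{[1,b]}_{(b+1,2)}$, or $a=b-1$ and $(m,n)=(b+1,3)$, i.e. the ring is $\mathbb{Z}^{[b-1,b]}_{(b+1,3)}$.
   Context: The ring of polyadic integer numbers $\mathbb{Z}^{[a,b]}_{(m,n)}$ is the congruence class $[[a]]_b=\{a+bk : k\in\mathbb{Z}\}$ equipped with the $m$-ary addition $\nu_m[x_1,\dots,x_m]=x_1+\dots+x_m$ and the $n$-ary multiplication $\mu_n[x_1,\dots,x_n]=x_1x_2\cdots x_n$ (ordinary integer sum and product); the choice of $m,n$ guarantees these operations are closed in $[[a]]_b$. For $\ell\in\mathbb{N}$, $\mu_n^{(\ell)}$ denotes the $\ell$-fold iterated composition of $\mu_n$, which takes $\ell(n-1)+1$ arguments. A unit of the ring is an element $e$ with $\mu_n[e,\dots,e,x]=x$ ($n-1$ copies of $e$) for all $x$ in the ring. A polyadic prime number is an element $x$ of the ring such that the ring has a unit $e$ and the only expansion of $x$ as a polyadic product $x=\mu_n^{(\ell)}[x_{1},\dots,x_{\ell(n-1)+1}]$ of elements of the ring is the trivial one $x=\mu_n^{(\ell)}[x,e,\dots,e]$ (with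 $\ell(n-1)$ copies of $e$). *)

(* Defs.v *)
From mathcomp Require Import all_boot all_order all_algebra.
Set Implicit Arguments. Unset Strict Implicit. Unset Printing Implicit Defensive.
Import Order.TTheory GRing.Theory Num.Theory.
Local Open Scope ring_scope.

Definition in_class (a b : nat) (x : int) : Prop := (x = a%:Z %[mod b%:Z])%Z.

(* Unit of the polyadic ring Z^{[a,b]}_{(m,n)}: mu_n[e,...,e,x] = x
   (n-1 copies of e) for all x in the ring. *)
Definition polyadic_unit (a b n : nat) (e : int) : Prop :=
  in_class a b e /\ forall x : int, in_class a b x -> e ^+ (n.-1) * x = x.

(* Polyadic prime: x is in the ring, the ring has a unit e, and every
   expansion x = mu_n^(l)[x_1, ..., x_{l(n-1)+1}] with all x_i in the ring
   is the trivial one [x, e, ..., e] (up to the order of the arguments,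
   the multiplication being commutative). *)
Definition polyadic_prime (a b n : nat) (x : int) : Prop :=
  in_class a b x /\
  exists e : int, polyadic_unit a b n e /\
    forall (l : nat) (s : seq int),
      size s = (l * n.-1).+1 ->
      (forall y, y \in s -> in_class a b y) ->
      \prod_(y <- s) y = x ->
      perm_eq s (x :: nseq (l * n.-1) e).

(* Main.v *)
Require Import Defs.
From mathcomp Require Import all_boot all_order all_algebra.
From mathcomp Require Import zify.
Import Order.TTheory GRing.Theory Num.Theory.

Lemma m_eq (a b m : nat) : (2 <= b)%N -> (2 <= m)%N -> (m * a = a %[mod b])%N ->
  (forall k : nat, (2 <= k)%N -> (k < m)%N -> (k * a <> a %[mod b])%N) ->
  (forall k, (1 <= k)%N -> (b %| (k - 1) * a)%N -> (b %| k - 1)%N) -> m = b.+1.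
Proof.
move=> b2 m2 Hm Hmin Hc.
case: (ltngtP m b.+1) => // H.
- have : (b %| m - 1)%N.
    apply: Hc; first by lia.
    have -> : ((m - 1) * a = m * a - a)%N by rewrite mulnBl mul1n.
    by rewrite -eqn_mod_dvd ?Hm // leq_pmull //; lia.
  move/dvdn_leq; lia.
- exfalso; apply: (Hmin b.+1) => //; first by lia.
  by rewrite mulSn addnC mulnC modnMDl.
Qed.

Lemma n_le (a b n k : nat) : (2 <= k)%N -> (a ^ k = a %[mod b])%N ->
  (forall k : nat, (2 <= k)%N -> (k < n)%N -> (a ^ k <> a %[mod b])%N) ->
  (n <= k)%N.
Proof.
move=> k2 Hk Hmin; case: (leqP n k) => // H; exfalso; exact: (Hmin k).
Qed.

Local Open Scope ring_scope.

Theorem mainTheorem1 (a b m n : nat) :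
  (a < b)%N ->
  (* m = minimal integer >= 2 with m a = a (mod b) *)
  (2 <= m)%N -> (m * a = a %[mod b])%N ->
  (forall k : nat, (2 <= k)%N -> (k < m)%N -> (k * a <> a %[mod b])%N) ->
  (* n = minimal integer >= 2 with a^n = a (mod b) *)
  (2 <= n)%N -> (a ^ n = a %[mod b])%N ->
  (forall k : nat, (2 <= k)%N -> (k < n)%N -> (a ^ k <> a %[mod b])%N) ->
  (exists x : int, polyadic_prime a b n x) ->
  (a = 1%N /\ m = b.+1 /\ n = 2%N) \/ (a = b.-1 /\ m = b.+1 /\ n = 3%N).
Proof.
move=> ab m2 Hm Hmmin n2 Hn Hnmin [x [Hx [e [[He Hu] Hp]]]].
have b0 : (0 < b)%N by lia.
have He1 : e ^+ n.-1 = 1.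
  have Hc : in_class a b (a + b)%N.
    by rewrite /in_class PoszD modzDr.
  have := Hu _ Hc.
  rewrite -{2}[Posz (a + b)%N]mul1r => /mulIf; apply; lia.
have Hne : (0 < n.-1)%N by lia.
have Hnorm : `|e| = 1.
  apply/eqP; rewrite -(pexpr_eq1 Hne) // -normrX He1 //.
have : e ^+ 2 == 1 by rewrite sqr_norm_eq1 Hnorm.
rewrite sqrf_eq1 => /orP [/eqP E1 | /eqP E1]; subst e.
-
  have Ha : (1 %% b)%N = (a %% b)%N.
    by apply/eqP; rewrite -eqz_nat -!modz_nat; apply/eqP; exact: He.
  rewrite (modn_small ab) in Ha.
  have [b1|b2] : b = 1%N \/ (2 <= b)%N by lia.
  +
    exfalso; subst b.
    have a0 : a = 0%N by lia.
    subst a.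
    have n2' : n = 2%N.
      apply/eqP; rewrite eqn_leq n2 andbT; apply: (@n_le 0 1 n 2%N) Hnmin => //.
    have := Hp 2%N [:: x; -1; -1].
    rewrite n2' /= !big_cons big_nil !mulrN1 opprK mulr1.
    have Hcl : forall y : int, in_class 0 1 y.
      move=> y; rewrite /in_class !modz1 //.
    move=> /(_ erefl (fun y _ => Hcl y) erefl).
    by rewrite perm_cons.
  + left; rewrite modn_small // in Ha; subst a; split => //.
    have n2' : n = 2%N.
      apply/eqP; rewrite eqn_leq n2 andbT; apply: (@n_le 1 b n 2%N) Hnmin => //.
    split => //.
    apply: (@m_eq 1 b m) => //.
    by move=> k _; rewrite muln1.
-
  have Hd : (b %| a.+1)%N.
    move: He; rewrite /in_class => /eqP; rewrite eqz_mod_dvd dvdzE.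
    have -> : `|((-1) - Posz a)%R|%N = a.+1 by lia.
    done.
  have ab1 : a.+1 = b by have := dvdn_leq (isT : (0 < a.+1)%N) Hd; lia.
  have Hodd : ~~ odd n.-1.
    apply/negP => Ho; move: He1; rewrite -signr_odd Ho expr1 => /eqP.
    by rewrite -subr_eq0 -opprD oppr_eq0.
  have Hn3 : (n <= 3)%N.
    apply: (@n_le a b n 3%N) Hnmin => //.
    case: a ab ab1 {Hm Hmmin Hd Hn Hx Hp Hu He} => [|a] ab ab1.
      by rewrite exp0n.
    have -> : (a.+1 ^ 3 = a.+1 * a * b + a.+1)%N.
      by rewrite -ab1; lia.
    by rewrite modnMDl.
  have n3 : n = 3%N.
    have [E|E] : n = 2%N \/ n = 3%N by lia.
      by rewrite E in Hodd.
    exact: E.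
  right; split; first lia.
  split => //.
  apply: (@m_eq a b m) => //.
    have [a0|a1] : a = 0%N \/ (1 <= a)%N by lia.
      exfalso; subst a; have b1 : b = 1%N by lia.
      subst b; rewrite n3 in Hnmin; apply: (Hnmin 2%N) => //.
    lia.
  move=> k k1 Hk.
  rewrite -(dvdn_addr _ Hk).
  have -> : ((k - 1) * a + (k - 1) = (k - 1) * b)%N by rewrite -ab1; lia.
  exact: dvdn_mull.
Qed.
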